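(* Let $(V,L,\varphi,E)$ and $(V,C,\psi,E)$ be valuation systems. Assume that $\psi$ extends $\varphi$ and that $(V,C,\psi,E)$ is complete. Then $\varphi$ is extendible and $\psi$ extends $\overline\varphi$.
   Context: A valuation system $(V,L,\varphi,E)$ consists of: (i) a lattice $V$ which is $\sigma$-distributive (for every $a\in V$ and sequence $(b_n)$ with existing infimum, $\bigwedge_n(a\vee b_n)$ exists and equals $a\vee\bigwedge_n b_n$, and dually for suprema); (ii) a sublattice $L$ of $V$; (iii) a partially ordered abelian group $E$ which is R-complete (whenever $x_1\ge x_2\ge\cdots$ and $y_1\ge y_2\ge\cdots$ in $E$ are such that $\bigwedge_n(x_n+y_n)$ exists, $\bigwedge_n x_n$ and $\bigwedge_n y_n$ exist; dually for increasing sequences); (iv) a valuation $\varphi:L\to E$ (order-preserving, $\varphi(a\wedge b)+\varphi(a\vee b)=\varphi(a)+\varphi(b)$). A map $\psi:C\to E$ extends $\varphi:L\to E$ if $L\subseteq C$ and $\psi|_L=\varphi$. A decreasing (resp. increasing) sequence $(a_n)$ in $L$ is $\varphi$-convergent if $\bigwedge_n a_n$ exists in $V$ and $\bigwedge_n\varphi(a_n)$ exists in $E$ (resp. with suprema). The system is $\Pi$-complete if for every $\varphi$-convergent decreasing $(a_n)$ in $L$, $\bigwedge_n a_n\in L$ and $\varphi(\bigwedge_n a_n)=\bigwedge_n\varphi(a_n)$; $\Sigma$-complete dually; complete if both. $\Pi L:=\{\bigwedge_n a_n:(a_n)\ \varphi\text{-convergent decreasing}\}$ and $\varphi$ is $\Pi$-extendible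 if there is a valuation $\Pi\varphi:\Pi L\to E$ with $\Pi\varphi(\bigwedge_n a_n)=\bigwedge_n\varphi(a_n)$; $\Sigma L,\Sigma\varphi$ dually. Hierarchy (transfinite recursion): $\Pi_0\varphi=\Sigma_0\varphi=\varphi$; $\varphi$ is $\Pi_{\alpha+1}$-extendible iff it is $\Sigma_\alpha$-extendible and $\Sigma_\alpha\varphi$ is $\Pi$-extendible, with $\Pi_{\alpha+1}\varphi=\Pi(\Sigma_\alpha\varphi)$; $\varphi$ is $\Sigma_{\alpha+1}$-extendible iff it is $\Pi_\alpha$-extendible and $\Pi_\alpha\varphi$ is $\Sigma$-extendible, with $\Sigma_{\alpha+1}\varphi=\Sigma(\Pi_\alpha\varphi)$; at a limit $\lambda$, $\varphi$ is $\Pi_\lambda$-extendible iff $\Pi_\alpha$-extendible for all $\alpha<\lambda$, and then $\Pi_\lambda\varphi$ is the common extension of the $\Pi_\alpha\varphi$ on $\bigcup_{\alpha<\lambda}\Pi_\alpha L$; similarly $\Sigma_\lambda$. The hierarchy has collapsed at $Q$, where $Q=\Pi_\alpha\varphi$ or $Q=\Sigma_\alpha\varphi$, if $\varphi$ is $\Pi_{\alpha+1}$- and $\Sigma_{\alpha+1}$-extendible and $\Pi(Q)=Q=\Sigma(Q)$. $\varphi$ is extendible if the hierarchy has collapsed at some $Q$; this $Q$ is then unique and denoted $\overline\varphi$. *)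

(* Defs.v *)
From HB Require Import structures.
From mathcomp Require Import all_boot all_order all_algebra.
Set Implicit Arguments. Unset Strict Implicit. Unset Printing Implicit Defensive.
Import Order.TTheory GRing.Theory Num.Theory.

Local Open Scope order_scope.

Section Bounds.
Context {dT : Order.disp_t} {T : porderType dT}.
Definition is_infimum (a : nat -> T) (x : T) : Prop :=
  (forall n, x <= a n) /\ (forall y, (forall n, y <= a n) -> y <= x).
Definition is_supremum (a : nat -> T) (x : T) : Prop :=
  (forall n, a n <= x) /\ (forall y, (forall n, a n <= y) -> x <= y).
Definition has_inf (a : nat -> T) : Prop := exists x, is_infimum a x.
Definition has_sup (a : nat -> T) : Prop := exists x, is_supremum a x.
Definition decreasing (a : nat -> T) : Prop := forall n, a n.+1 <= a n.
Definition increasing (a : nat -> T) : Prop := forall n, a n <= a n.+1.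
End Bounds.

Definition sigma_distributive {d : Order.disp_t} (V : latticeType d) : Prop :=
  (forall (a : V) (b : nat -> V) (m : V), is_infimum b m ->
      is_infimum (fun n => a `|` b n) (a `|` m)) /\
  (forall (a : V) (b : nat -> V) (m : V), is_supremum b m ->
      is_supremum (fun n => a `&` b n) (a `&` m)).

Definition po_group (E : porderZmodType) : Prop :=
  forall x y z : E, (x <= y)%R -> (x + z <= y + z)%R.

Definition R_complete (E : porderZmodType) : Prop :=
  (forall x y : nat -> E, decreasing x -> decreasing y ->
     has_inf (fun n => (x n + y n)%R) -> has_inf x /\ has_inf y) /\
  (forall x y : nat -> E, increasing x -> increasing y ->
     has_sup (fun n => (x n + y n)%R) -> has_sup x /\ has_sup y).

Section Valuations.
Context {d : Order.disp_t} {V : latticeType d} {E : porderZmodType}.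

(* A partial map V -> E: a domain together with a function (relevant on the domain). *)
Record pmap := PMap { dom : V -> Prop; fn : V -> E }.

Definition sublattice (L : V -> Prop) : Prop :=
  forall a b, L a -> L b -> L (a `&` b) /\ L (a `|` b).

Definition valuation (s : pmap) : Prop :=
  sublattice (dom s) /\
  (forall a b, dom s a -> dom s b -> a <= b -> (fn s a <= fn s b)%R) /\
  (forall a b, dom s a -> dom s b ->
     (fn s (a `&` b) + fn s (a `|` b) = fn s a + fn s b)%R).

Definition valuation_system (s : pmap) : Prop :=
  sigma_distributive V /\ po_group E /\ R_complete E /\ valuation s.

Definition extends (s t : pmap) : Prop :=
  (forall x, dom s x -> dom t x) /\ (forall x, dom s x -> fn t x = fn s x).

Definition peq (s t : pmap) : Prop :=
  (forall x, dom s x <-> dom t x) /\ (forall x, dom s x -> fn s x = fn t x).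

Definition conv_dec (s : pmap) (a : nat -> V) : Prop :=
  (forall n, dom s (a n)) /\ decreasing a /\ has_inf a /\ has_inf (fun n => fn s (a n)).
Definition conv_inc (s : pmap) (a : nat -> V) : Prop :=
  (forall n, dom s (a n)) /\ increasing a /\ has_sup a /\ has_sup (fun n => fn s (a n)).

Definition Pi_complete (s : pmap) : Prop :=
  forall a, conv_dec s a -> forall x, is_infimum a x ->
    dom s x /\ is_infimum (fun n => fn s (a n)) (fn s x).
Definition Sigma_complete (s : pmap) : Prop :=
  forall a, conv_inc s a -> forall x, is_supremum a x ->
    dom s x /\ is_supremum (fun n => fn s (a n)) (fn s x).
Definition complete (s : pmap) : Prop := Pi_complete s /\ Sigma_complete s.

Definition Pi_dom (s : pmap) (x : V) : Prop :=
  exists a, conv_dec s a /\ is_infimum a x.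
Definition Sigma_dom (s : pmap) (x : V) : Prop :=
  exists a, conv_inc s a /\ is_supremum a x.

Definition Pi_ext (s t : pmap) : Prop :=
  (forall x, dom t x <-> Pi_dom s x) /\ valuation t /\
  (forall a, conv_dec s a -> forall x, is_infimum a x ->
     is_infimum (fun n => fn s (a n)) (fn t x)).
Definition Sigma_ext (s t : pmap) : Prop :=
  (forall x, dom t x <-> Sigma_dom s x) /\ valuation t /\
  (forall a, conv_inc s a -> forall x, is_supremum a x ->
     is_supremum (fun n => fn s (a n)) (fn t x)).

Definition Pi_extendible (s : pmap) : Prop := exists t, Pi_ext s t.
Definition Sigma_extendible (s : pmap) : Prop := exists t, Sigma_ext s t.

(* ---------- the transfinite hierarchy ----------
   Ordinals are represented by an arbitrary well-ordered index type (W, lt);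
   every well-order is isomorphic to an ordinal. *)
Definition well_order (W : Type) (lt : W -> W -> Prop) : Prop :=
  well_founded lt /\ (forall x y z, lt x y -> lt y z -> lt x z) /\
  (forall x y, lt x y \/ x = y \/ lt y x).

(* g is the immediate predecessor of b, i.e. b = g + 1 *)
Definition is_pred (W : Type) (lt : W -> W -> Prop) (g b : W) : Prop :=
  lt g b /\ (forall h, lt h b -> h = g \/ lt h g).

(* P b = Pi_b phi and S b = Sigma_b phi for all b in W
   (in particular phi is Pi_b- and Sigma_b-extendible for all b in W). *)
Definition hierarchy (phi : pmap) (W : Type) (lt : W -> W -> Prop)
    (P S : W -> pmap) : Prop :=
  forall b : W,
    ((forall g, ~ lt g b) -> peq (P b) phi /\ peq (S b) phi) /\
    (forall g, is_pred lt g b -> Pi_ext (S g) (P b) /\ Sigma_ext (P g) (S b)) /\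
    ((exists g, lt g b) -> (forall g, ~ is_pred lt g b) ->
       (forall x, dom (P b) x <-> exists g, lt g b /\ dom (P g) x) /\
       (forall g, lt g b -> extends (P g) (P b)) /\
       (forall x, dom (S b) x <-> exists g, lt g b /\ dom (S g) x) /\
       (forall g, lt g b -> extends (S g) (S b))).

(* The hierarchy has collapsed at Q, where Q = Pi_a phi or Q = Sigma_a phi:
   phi is Pi_{a+1}- and Sigma_{a+1}-extendible and Pi(Q) = Q = Sigma(Q). *)
Definition collapsed_at (phi Q : pmap) : Prop :=
  exists (W : Type) (lt : W -> W -> Prop) (P S : W -> pmap) (a : W),
    well_order lt /\ hierarchy phi lt P S /\
    Pi_extendible (S a) /\ Sigma_extendible (P a) /\
    (Q = P a \/ Q = S a) /\ Pi_ext Q Q /\ Sigma_ext Q Q.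

Definition extendible (phi : pmap) : Prop := exists Q, collapsed_at phi Q.

End Valuations.

(* Main.v *)
From HB Require Import structures.
Require Import Defs.
From mathcomp Require Import all_boot all_order all_algebra.
From mathcomp Require Import boolp wochoice.
From Stdlib Require Classical_Prop.
Set Implicit Arguments. Unset Strict Implicit. Unset Printing Implicit Defensive.
Import Order.TTheory GRing.Theory Num.Theory.
Local Open Scope order_scope.

Inductive and6 (P1 P2 P3 P4 P5 P6 : Prop) : Prop := And6 of P1 & P2 & P3 & P4 & P5 & P6.

Section Poset.
Context {dT : Order.disp_t} {T : porderType dT}.

Lemma inf_unique (a : nat -> T) x y : is_infimum a x -> is_infimum a y -> x = y.
Proof.
move=> [hx1 hx2] [hy1 hy2]; apply: le_anti; apply/andP; split.
  exact: hy2. exact: hx2.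
Qed.

Lemma sup_unique (a : nat -> T) x y : is_supremum a x -> is_supremum a y -> x = y.
Proof.
move=> [hx1 hx2] [hy1 hy2]; apply: le_anti; apply/andP; split.
  exact: hx2. exact: hy2.
Qed.

Lemma dec_le (a : nat -> T) m n : decreasing a -> (m <= n)%N -> a n <= a m.
Proof.
move=> ha; elim: n => [|n IH]; first by rewrite leqn0 => /eqP ->.
rewrite leq_eqVlt => /orP[/eqP -> //|]; rewrite ltnS => /IH h.
exact: le_trans (ha n) h.
Qed.

Lemma inc_le (a : nat -> T) m n : increasing a -> (m <= n)%N -> a m <= a n.
Proof.
move=> ha; elim: n => [|n IH]; first by rewrite leqn0 => /eqP ->.
rewrite leq_eqVlt => /orP[/eqP -> //|]; rewrite ltnS => /IH h.
exact: le_trans h (ha n).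
Qed.

Lemma inf_const (x : T) : is_infimum (fun _ => x) x.
Proof. by split=> // y /(_ 0%N). Qed.

Lemma sup_const (x : T) : is_supremum (fun _ => x) x.
Proof. by split=> // y /(_ 0%N). Qed.

End Poset.

Section Lat.
Context {d : Order.disp_t} {V : latticeType d}.

Lemma inf_meet (a b : nat -> V) x y : is_infimum a x -> is_infimum b y ->
  is_infimum (fun n => a n `&` b n) (x `&` y).
Proof.
move=> [ha1 ha2] [hb1 hb2]; split=> [n|z hz]; first exact: leI2.
rewrite lexI; apply/andP; split.
  by apply: ha2 => n; apply: le_trans (hz n) _; exact: leIl.
by apply: hb2 => n; apply: le_trans (hz n) _; exact: leIr.
Qed.

Lemma sup_join (a b : nat -> V) x y : is_supremum a x -> is_supremum b y ->
  is_supremum (fun n => a n `|` b n) (x `|` y).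
Proof.
move=> [ha1 ha2] [hb1 hb2]; split=> [n|z hz]; first exact: leU2.
rewrite leUx; apply/andP; split.
  by apply: ha2 => n; apply: le_trans (hz n); exact: leUl.
by apply: hb2 => n; apply: le_trans (hz n); exact: leUr.
Qed.

Lemma inf_join (a b : nat -> V) x y : sigma_distributive V ->
  decreasing a -> decreasing b -> is_infimum a x -> is_infimum b y ->
  is_infimum (fun n => a n `|` b n) (x `|` y).
Proof.
move=> [sd _] da db [ha1 ha2] [hb1 hb2]; split=> [n|z hz]; first exact: leU2.
have h1 n : z <= a n `|` y.
  have [_ H] := sd (a n) b y (conj hb1 hb2).
  apply: H => m; apply: le_trans (hz (n + m)%N) _.
  by apply: leU2; apply: dec_le => //; [exact: leq_addr | exact: leq_addl].
have [_ H] := sd y a x (conj ha1 ha2).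
rewrite joinC; apply: H => n; rewrite joinC; exact: h1.
Qed.

Lemma sup_meet (a b : nat -> V) x y : sigma_distributive V ->
  increasing a -> increasing b -> is_supremum a x -> is_supremum b y ->
  is_supremum (fun n => a n `&` b n) (x `&` y).
Proof.
move=> [_ sd] da db [ha1 ha2] [hb1 hb2]; split=> [n|z hz]; first exact: leI2.
have h1 n : a n `&` y <= z.
  have [_ H] := sd (a n) b y (conj hb1 hb2).
  apply: H => m; apply: le_trans _ (hz (n + m)%N).
  by apply: leI2; apply: inc_le => //; [exact: leq_addr | exact: leq_addl].
have [_ H] := sd y a x (conj ha1 ha2).
rewrite meetC; apply: H => n; rewrite meetC; exact: h1.
Qed.

End Lat.

Section Grp.
Context {E : porderZmodType}.
Local Open Scope ring_scope.

Lemma po_addl (hE : po_group E) (x y z : E) : x <= y -> z + x <= z + y.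
Proof. by move=> h; rewrite ![z + _]addrC; apply: hE. Qed.

Lemma inf_add (hE : po_group E) (x y : nat -> E) X Y : decreasing x -> decreasing y ->
  is_infimum x X -> is_infimum y Y -> is_infimum (fun n => x n + y n) (X + Y).
Proof.
move=> dx dy [hx1 hx2] [hy1 hy2]; split=> [n|z hz].
  apply: le_trans (hE _ _ _ (hx1 n)) _; exact: (po_addl hE).
have h1 m : z - Y <= x m.
  have h2 : z - x m <= Y.
    apply: hy2 => n.
    have h3 : z <= x m + y n.
      apply: le_trans (hz (n + m)%N) _.
      apply: le_trans (hE _ _ _ (dec_le dx (leq_addl n m))) _.
      apply: (po_addl hE); apply: dec_le => //; exact: leq_addr.
    by have := hE _ _ (- x m) h3; rewrite addrAC subrr add0r.
  have := hE _ _ (x m - Y) h2.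
  have e1 : Y + (x m - Y) = x m by rewrite addrC subrK.
  have e2 : z - x m + (x m - Y) = z - Y by rewrite addrA subrK.
  by rewrite e1 e2.
have := hE _ _ Y (hx2 _ h1); by rewrite subrK.
Qed.

Lemma sup_add (hE : po_group E) (x y : nat -> E) X Y : increasing x -> increasing y ->
  is_supremum x X -> is_supremum y Y -> is_supremum (fun n => x n + y n) (X + Y).
Proof.
move=> dx dy [hx1 hx2] [hy1 hy2]; split=> [n|z hz].
  apply: le_trans (hE _ _ _ (hx1 n)); exact: (po_addl hE).
have h1 m : x m <= z - Y.
  have h2 : Y <= z - x m.
    apply: hy2 => n.
    have h3 : x m + y n <= z.
      apply: le_trans _ (hz (n + m)%N).
      apply: le_trans (hE _ _ _ (inc_le dx (leq_addl n m))).
      apply: (po_addl hE); apply: inc_le => //; exact: leq_addr.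
    by have := hE _ _ (- x m) h3; rewrite addrAC subrr add0r.
  have := hE _ _ (x m - Y) h2.
  have e1 : Y + (x m - Y) = x m by rewrite addrC subrK.
  have e2 : z - x m + (x m - Y) = z - Y by rewrite addrA subrK.
  by rewrite e1 e2.
have := hE _ _ Y (hx2 _ h1); by rewrite subrK.
Qed.

End Grp.

Section PiSigma.
Context {d : Order.disp_t} {V : latticeType d} {E : porderZmodType}.
Variables (C : V -> Prop) (psi : V -> E).
Hypothesis sdV : sigma_distributive V.
Hypothesis poE : po_group E.
Hypothesis RcE : R_complete E.
Hypothesis valC : valuation (PMap C psi).
Hypothesis compC : complete (PMap C psi).

Definition PiD (D : V -> Prop) := Pi_dom (PMap D psi).
Definition SiD (D : V -> Prop) := Sigma_dom (PMap D psi).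

Lemma PiD_incl D x : D x -> PiD D x.
Proof.
move=> Dx; exists (fun _ => x); split; last exact: inf_const.
split; first by move=> n.
split; first by move=> n; exact: le_refl.
split; first by exists x; exact: inf_const.
exists (psi x); exact: inf_const.
Qed.

Lemma SiD_incl D x : D x -> SiD D x.
Proof.
move=> Dx; exists (fun _ => x); split; last exact: sup_const.
split; first by move=> n.
split; first by move=> n; exact: le_refl.
split; first by exists x; exact: sup_const.
exists (psi x); exact: sup_const.
Qed.

Lemma PiD_mono (D D' : V -> Prop) : (forall x, D x -> D' x) -> forall x, PiD D x -> PiD D' x.
Proof.
move=> h x [a [[h1 h2] h3]]; exists a; split; last exact: h3.
split; last exact: h2.
move=> n /=; apply: h; exact: h1.
Qed.

Lemma SiD_mono (D D' : V -> Prop) : (forall x, D x -> D' x) -> forall x, SiD D x -> SiD D' x.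
Proof.
move=> h x [a [[h1 h2] h3]]; exists a; split; last exact: h3.
split; last exact: h2.
move=> n /=; apply: h; exact: h1.
Qed.

Lemma conv_dec_C D a : (forall x, D x -> C x) -> conv_dec (PMap D psi) a -> conv_dec (PMap C psi) a.
Proof. move=> h [h1 h2]; split; last exact: h2. move=> n /=; apply: h; exact: h1. Qed.

Lemma conv_inc_C D a : (forall x, D x -> C x) -> conv_inc (PMap D psi) a -> conv_inc (PMap C psi) a.
Proof. move=> h [h1 h2]; split; last exact: h2. move=> n /=; apply: h; exact: h1. Qed.

Lemma PiD_sub D : (forall x, D x -> C x) -> forall x, PiD D x -> C x.
Proof.
move=> h x [a [ca ia]]; have [] := compC.1 a (conv_dec_C h ca) x ia; done.
Qed.

Lemma SiD_sub D : (forall x, D x -> C x) -> forall x, SiD D x -> C x.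
Proof.
move=> h x [a [ca ia]]; have [] := compC.2 a (conv_inc_C h ca) x ia; done.
Qed.

Lemma psi_mono x y : C x -> C y -> x <= y -> (psi x <= psi y)%R.
Proof. by move=> cx cy; apply: valC.2.1. Qed.

Lemma psi_mod x y : C x -> C y -> (psi (x `&` y) + psi (x `|` y) = psi x + psi y)%R.
Proof. by move=> cx cy; apply: valC.2.2. Qed.

Lemma has_inf_ext (a b : nat -> E) : (forall n, a n = b n) -> has_inf a -> has_inf b.
Proof. by move=> h; have -> : a = b by apply: funext. Qed.

Lemma has_sup_ext (a b : nat -> E) : (forall n, a n = b n) -> has_sup a -> has_sup b.
Proof. by move=> h; have -> : a = b by apply: funext. Qed.

Lemma PiD_sublattice D : (forall x, D x -> C x) -> sublattice D -> sublattice (PiD D).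
Proof.
move=> DC sD x y [a [[a1 [a2 [a3 [X a4]]]] ia]] [b [[b1 [b2 [b3 [Y b4]]]] ib]].
have Dc n : D (a n `&` b n) by have [] := sD _ _ (a1 n) (b1 n).
have Dd n : D (a n `|` b n) by have [] := sD _ _ (a1 n) (b1 n).
have dc : decreasing (fun n => a n `&` b n) by move=> n; apply: leI2.
have dd : decreasing (fun n => a n `|` b n) by move=> n; apply: leU2.
have [hc hd] : has_inf (fun n => psi (a n `&` b n)) /\ has_inf (fun n => psi (a n `|` b n)).
  have Ca n : C (a n) := DC _ (a1 n).
  have Cb n : C (b n) := DC _ (b1 n).
  have Cc n : C (a n `&` b n) := DC _ (Dc n).
  have Cd n : C (a n `|` b n) := DC _ (Dd n).
  apply: RcE.1.
  - by move=> n; apply: psi_mono; [apply: Cc | apply: Cc | apply: dc].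
  - by move=> n; apply: psi_mono; [apply: Cd | apply: Cd | apply: dd].
  apply: (@has_inf_ext (fun n => psi (a n) + psi (b n))%R).
    by move=> n; rewrite psi_mod.
  exists (X + Y)%R; apply: inf_add => //.
  - by move=> n; apply: psi_mono; [apply: Ca | apply: Ca | apply: a2].
  - by move=> n; apply: psi_mono; [apply: Cb | apply: Cb | apply: b2].
split.
  exists (fun n => a n `&` b n); split; last exact: inf_meet.
  by split=> //; split=> //; split=> //; exists (x `&` y); exact: inf_meet.
exists (fun n => a n `|` b n); split; last exact: inf_join.
by split=> //; split=> //; split=> //; exists (x `|` y); exact: inf_join.
Qed.

Lemma SiD_sublattice D : (forall x, D x -> C x) -> sublattice D -> sublattice (SiD D).
Proof.
move=> DC sD x y [a [[a1 [a2 [a3 [X a4]]]] ia]] [b [[b1 [b2 [b3 [Y b4]]]] ib]].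
have Dc n : D (a n `&` b n) by have [] := sD _ _ (a1 n) (b1 n).
have Dd n : D (a n `|` b n) by have [] := sD _ _ (a1 n) (b1 n).
have dc : increasing (fun n => a n `&` b n) by move=> n; apply: leI2.
have dd : increasing (fun n => a n `|` b n) by move=> n; apply: leU2.
have [hc hd] : has_sup (fun n => psi (a n `&` b n)) /\ has_sup (fun n => psi (a n `|` b n)).
  have Ca n : C (a n) := DC _ (a1 n).
  have Cb n : C (b n) := DC _ (b1 n).
  have Cc n : C (a n `&` b n) := DC _ (Dc n).
  have Cd n : C (a n `|` b n) := DC _ (Dd n).
  apply: RcE.2.
  - by move=> n; apply: psi_mono; [apply: Cc | apply: Cc | apply: dc].
  - by move=> n; apply: psi_mono; [apply: Cd | apply: Cd | apply: dd].
  apply: (@has_sup_ext (fun n => psi (a n) + psi (b n))%R).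
    by move=> n; rewrite psi_mod.
  exists (X + Y)%R; apply: sup_add => //.
  - by move=> n; apply: psi_mono; [apply: Ca | apply: Ca | apply: a2].
  - by move=> n; apply: psi_mono; [apply: Cb | apply: Cb | apply: b2].
split.
  exists (fun n => a n `&` b n); split; last exact: sup_meet.
  by split=> //; split=> //; split=> //; exists (x `&` y); exact: sup_meet.
exists (fun n => a n `|` b n); split; last exact: sup_join.
by split=> //; split=> //; split=> //; exists (x `|` y); exact: sup_join.
Qed.

Lemma valuation_dom (D : V -> Prop) : (forall x, D x -> C x) -> sublattice D ->
  valuation (PMap D psi).
Proof.
move=> DC sD; split=> //; split=> /= a b da db.
  by apply: psi_mono; apply: DC.
by apply: psi_mod; apply: DC.
Qed.

Lemma sublattice_iff (D D' : V -> Prop) : (forall x, D x <-> D' x) -> sublattice D -> sublattice D'.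
Proof.
move=> h sD x y /h dx /h dy; have [h1 h2] := sD _ _ dx dy; split; exact/h.
Qed.

Lemma Pi_ext_lem (D D' : V -> Prop) : (forall x, D x -> C x) -> sublattice D ->
  (forall x, D' x <-> PiD D x) -> Pi_ext (PMap D psi) (PMap D' psi).
Proof.
move=> DC sD hD; split=> //; split.
  apply: valuation_dom.
    by move=> x /hD; apply: PiD_sub.
  by apply: (sublattice_iff (D := PiD D)) => [x|]; [split=> /hD | apply: PiD_sublattice].
move=> a ca x ia /=; have [] := compC.1 a (conv_dec_C DC ca) x ia; done.
Qed.

Lemma Sigma_ext_lem (D D' : V -> Prop) : (forall x, D x -> C x) -> sublattice D ->
  (forall x, D' x <-> SiD D x) -> Sigma_ext (PMap D psi) (PMap D' psi).
Proof.
move=> DC sD hD; split=> //; split.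
  apply: valuation_dom.
    by move=> x /hD; apply: SiD_sub.
  by apply: (sublattice_iff (D := SiD D)) => [x|]; [split=> /hD | apply: SiD_sublattice].
move=> a ca x ia /=; have [] := compC.2 a (conv_inc_C DC ca) x ia; done.
Qed.


Variables (L : V -> Prop) (phi : V -> E).
Hypothesis valL : valuation (PMap L phi).
Hypothesis extLC : extends (PMap L phi) (PMap C psi).

Lemma LC x : L x -> C x.
Proof. exact: extLC.1. Qed.

Lemma hier_extends (W : Type) (lt : W -> W -> Prop) (P S : W -> @Defs.pmap d V E) :
  well_founded lt -> hierarchy (PMap L phi) lt P S ->
  forall b, extends (P b) (PMap C psi) /\ extends (S b) (PMap C psi).
Proof.
move=> wf hh; elim/(well_founded_ind wf) => b IH.
have [[hmin hsucc] hlim] := (proj1 (hh b), proj1 (proj2 (hh b)), proj2 (proj2 (hh b))).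
case: (Classical_Prop.classic (exists g, lt g b)) => [exg|nexg]; last first.
  have nlt : forall g, ~ lt g b by move=> g hg; apply: nexg; exists g.
  have [[p1 p2] [s1 s2]] := hmin nlt.
  split; split=> x hx.
  - by apply: LC; apply/p1.
  - by rewrite p2 //; apply: extLC.2; apply/p1.
  - by apply: LC; apply/s1.
  - by rewrite s2 //; apply: extLC.2; apply/s1.
case: (Classical_Prop.classic (exists g, is_pred lt g b)) => [[g pg]|npred]; last first.
  have np : forall g, ~ is_pred lt g b by move=> g hg; apply: npred; exists g.
  have [p1 [p2 [s1 s2]]] := hlim exg np.
  split; split=> x /[dup] hx.
  - by move=> /p1 [g [lg hg]]; apply: (proj1 (IH g lg)).1.
  - move=> /p1 [g [lg hg]]; rewrite (p2 g lg).2 //; exact: (proj1 (IH g lg)).2.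
  - by move=> /s1 [g [lg hg]]; apply: (proj2 (IH g lg)).1.
  - move=> /s1 [g [lg hg]]; rewrite (s2 g lg).2 //; exact: (proj2 (IH g lg)).2.
have [[Pd [_ Pi]] [Sd [_ Si]]] := hsucc g pg.
have [[eP1 eP2] [eS1 eS2]] := IH g pg.1.
split; split=> x hx.
- have [a [ca ia]] := (Pd x).1 hx.
  have cC : conv_dec (PMap C psi) a.
    case: ca => [c1 [c2 [c3 c4]]]; split; first by move=> n; apply: eS1.
    do 2!split => //; apply: (has_inf_ext _ c4) => n; symmetry; exact: (eS2 _ (c1 n)).
  by have [] := compC.1 a cC x ia.
- have [a [ca ia]] := (Pd x).1 hx.
  have cC : conv_dec (PMap C psi) a.
    case: ca => [c1 [c2 [c3 c4]]]; split; first by move=> n; apply: eS1.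
    do 2!split => //; apply: (has_inf_ext _ c4) => n; symmetry; exact: (eS2 _ (c1 n)).
  have [_ h1] := compC.1 a cC x ia.
  have h2 := Pi a ca x ia.
  have e : (fun n => fn (S g) (a n)) = (fun n => psi (a n)).
    by apply: funext => n; symmetry; apply: (eS2 _ (proj1 ca n)).
  rewrite e in h2; exact: inf_unique h1 h2.
- have [a [ca ia]] := (Sd x).1 hx.
  have cC : conv_inc (PMap C psi) a.
    case: ca => [c1 [c2 [c3 c4]]]; split; first by move=> n; apply: eP1.
    do 2!split => //; apply: (has_sup_ext _ c4) => n; symmetry; exact: (eP2 _ (c1 n)).
  by have [] := compC.2 a cC x ia.
- have [a [ca ia]] := (Sd x).1 hx.
  have cC : conv_inc (PMap C psi) a.
    case: ca => [c1 [c2 [c3 c4]]]; split; first by move=> n; apply: eP1.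
    do 2!split => //; apply: (has_sup_ext _ c4) => n; symmetry; exact: (eP2 _ (c1 n)).
  have [_ h1] := compC.2 a cC x ia.
  have h2 := Si a ca x ia.
  have e : (fun n => fn (P g) (a n)) = (fun n => psi (a n)).
    by apply: funext => n; symmetry; apply: (eP2 _ (proj1 ca n)).
  rewrite e in h2; exact: sup_unique h1 h2.
Qed.


Definition TT := ((V + V)%type -> Prop).
Definition RR : rel TT := sval (well_ordering_principle TT).
Lemma RRwo : well_order RR.
Proof. exact: svalP (well_ordering_principle TT). Qed.

Lemma RR_refl x : RR x x.
Proof.
have [z [[z1 z2] _]] := RRwo (A := pred1 x) (ex_intro _ x (eqxx x)).
by move: z1 => /eqP e; subst z; apply: z2; rewrite inE.
Qed.

Lemma RR_anti x y : RR x y -> RR y x -> x = y.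
Proof.
move=> hxy hyx.
pose A : {pred TT} := [pred z | (z == x) || (z == y)].
have hA : nonempty A by exists x; rewrite inE eqxx.
have [z [_ zu]] := RRwo hA.
have mx : minimum_of RR A x.
  split; first by rewrite inE eqxx.
  by move=> w; rewrite inE => /orP[/eqP ->|/eqP ->] //; exact: RR_refl.
have my : minimum_of RR A y.
  split; first by rewrite inE eqxx orbT.
  by move=> w; rewrite inE => /orP[/eqP ->|/eqP ->] //; exact: RR_refl.
by rewrite -(zu _ mx) -(zu _ my).
Qed.

Lemma RR_total x y : RR x y \/ RR y x.
Proof.
pose A : {pred TT} := [pred z | (z == x) || (z == y)].
have hA : nonempty A by exists x; rewrite inE eqxx.
have [z [[z1 z2] _]] := RRwo hA.
move: z1; rewrite inE => /orP[/eqP e|/eqP e]; subst z.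
  by left; apply: z2; rewrite inE eqxx orbT.
by right; apply: z2; rewrite inE eqxx.
Qed.

Lemma RR_trans x y z : RR x y -> RR y z -> RR x z.
Proof.
move=> hxy hyz.
pose A : {pred TT} := [pred w | [|| w == x, w == y | w == z]].
have hA : nonempty A by exists x; rewrite inE eqxx.
have [m [[m1 m2] _]] := RRwo hA.
move: m1; rewrite inE => /or3P[/eqP e|/eqP e|/eqP e]; subst m.
- by apply: m2; rewrite inE eqxx !orbT.
- have exy : x = y by apply: RR_anti => //; apply: m2; rewrite inE eqxx.
  by rewrite exy.
- have eyz : y = z by apply: RR_anti => //; apply: m2; rewrite inE eqxx !orbT.
  by rewrite -eyz.
Qed.

Definition ltT (s t : TT) := RR s t /\ s <> t.

Lemma ltT_wf : well_founded ltT.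
Proof.
move=> x; apply: Classical_Prop.NNPP => nax.
pose A : {pred TT} := [pred z | `[< ~ Acc ltT z >]].
have hA : nonempty A by exists x; rewrite inE; apply/asboolP.
have [m [[m1 m2] _]] := RRwo hA.
move: m1; rewrite inE => /asboolP; apply; constructor => y [hy ne].
apply: Classical_Prop.NNPP => nay; apply: ne; apply: RR_anti => //.
by apply: m2; rewrite inE; apply/asboolP.
Qed.

Lemma ltT_tri s t : ltT s t \/ s = t \/ ltT t s.
Proof.
case: (Classical_Prop.classic (s = t)) => [->|ne]; first by right; left.
by case: (RR_total s t) => h; [left | right; right]; split=> // e; apply: ne.
Qed.

Lemma ltT_trans s t u : ltT s t -> ltT t u -> ltT s u.
Proof.
move=> [h1 n1] [h2 n2]; split; first exact: RR_trans h1 h2.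
move=> e; subst u; apply: n1; exact: RR_anti.
Qed.

Definition WW := (TT * nat)%type.
Definition ltW (p q : WW) := ltT p.1 q.1 \/ (p.1 = q.1 /\ (p.2 < q.2)%N).

Lemma ltW_wf : well_founded ltW.
Proof.
move=> [s n]; move: n; elim/(well_founded_ind ltT_wf): s => s IHs n.
elim/ltn_ind: n => n IHn; constructor => [[s' m]] [/= h|[/= e h]].
  exact: IHs.
subst s'; exact: IHn.
Qed.

Lemma ltW_trans p q r : ltW p q -> ltW q r -> ltW p r.
Proof.
case: p q r => [s m] [t n] [u k] /=.
rewrite /ltW /= => [[h1|[e1 h1]] [h2|[e2 h2]]].
- by left; exact: ltT_trans h1 h2.
- by subst u; left.
- by subst t; left.
- by subst t u; right; split=> //; exact: ltn_trans h1 h2.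
Qed.

Lemma ltW_tri p q : ltW p q \/ p = q \/ ltW q p.
Proof.
case: p q => [s m] [t n]; rewrite /ltW /=.
case: (ltT_tri s t) => [h|[e|h]]; [by left; left| |by right; right; left].
subst t; case: (ltngtP m n) => [h|h|->].
- by left; right.
- by right; right; right.
- by right; left.
Qed.

Lemma ltW_irr p : ~ ltW p p.
Proof.
move=> h; have : Acc ltW p := ltW_wf p.
elim=> q _ IH; apply: IH.
Abort.

Lemma ltW_irr p : ~ ltW p p.
Proof.
have : Acc ltW p := ltW_wf p.
by elim=> q _ IH hq; apply: (IH q hq hq).
Qed.

Lemma ltW_wo : Defs.well_order ltW.
Proof. split; first exact: ltW_wf. split; [exact: ltW_trans | exact: ltW_tri]. Qed.

Definition succ (p : WW) : WW := (p.1, p.2.+1).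

Lemma succ_pred p : is_pred ltW p (succ p).
Proof.
case: p => s n; split; first by right.
move=> [t m] [/= h|[/= e h]]; first by right; left.
subst t; move: h; rewrite ltnS leq_eqVlt => /orP[/eqP ->|h]; first by left.
by right; right.
Qed.

Lemma succ_lt g b : ltW g b -> b = succ g \/ ltW (succ g) b.
Proof.
case: g b => [s m] [t n] [/= h|[/= e h]]; first by right; left.
subst t; move: h; rewrite leq_eqVlt => /orP[/eqP <-|h]; first by left.
by right; right.
Qed.

Lemma pred_unique g g' b : is_pred ltW g b -> is_pred ltW g' b -> g = g'.
Proof.
move=> [h1 h2] [h1' h2'].
case: (h2 _ h1') => [//|lt1]; case: (h2' _ h1) => [//|lt2].
by case: (ltW_irr (ltW_trans lt1 lt2)).
Qed.

Definition SP := ((V -> Prop) * (V -> Prop))%type.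

Definition step (b : WW) (h : forall g, ltW g b -> SP) : SP :=
  (fun x => (exists g (H : ltW g b), is_pred ltW g b /\ PiD (h g H).2 x) \/
            ((forall g, ~ is_pred ltW g b) /\ (L x \/ exists g (H : ltW g b), (h g H).1 x)),
   fun x => (exists g (H : ltW g b), is_pred ltW g b /\ SiD (h g H).1 x) \/
            ((forall g, ~ is_pred ltW g b) /\ (L x \/ exists g (H : ltW g b), (h g H).2 x))).

Definition stage : WW -> SP := Fix ltW_wf (fun _ => SP) step.

Lemma stage_eq b : stage b = @step b (fun g _ => stage g).
Proof.
rewrite /stage Fix_eq // => x f g H.
have -> // : f = g.
apply: functional_extensionality_dep => y; apply: functional_extensionality_dep => p.
exact: H.
Qed.

Definition DP b := (stage b).1.
Definition DS b := (stage b).2.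

Lemma DP_succ g b : is_pred ltW g b -> forall x, DP b x <-> PiD (DS g) x.
Proof.
move=> pg x; rewrite /DP stage_eq /=; split.
  case=> [[g' [H [pg' hx]]]|[np _]]; last by case: (np g).
  by rewrite (pred_unique pg pg').
by move=> hx; left; exists g, pg.1.
Qed.

Lemma DS_succ g b : is_pred ltW g b -> forall x, DS b x <-> SiD (DP g) x.
Proof.
move=> pg x; rewrite /DS stage_eq /=; split.
  case=> [[g' [H [pg' hx]]]|[np _]]; last by case: (np g).
  by rewrite (pred_unique pg pg').
by move=> hx; left; exists g, pg.1.
Qed.

Lemma DP_ns b : (forall g, ~ is_pred ltW g b) ->
  forall x, DP b x <-> L x \/ exists g, ltW g b /\ DP g x.
Proof.
move=> np x; rewrite /DP stage_eq /=; split.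
  case=> [[g' [H [pg' hx]]]|[_ [hx|[g [H hx]]]]]; first by case: (np g').
    by left.
  by right; exists g.
case=> [hx|[g [H hx]]]; right; split=> //; first by left.
by right; exists g, H.
Qed.

Lemma DS_ns b : (forall g, ~ is_pred ltW g b) ->
  forall x, DS b x <-> L x \/ exists g, ltW g b /\ DS g x.
Proof.
move=> np x; rewrite /DS stage_eq /=; split.
  case=> [[g' [H [pg' hx]]]|[_ [hx|[g [H hx]]]]]; first by case: (np g').
    by left.
  by right; exists g.
case=> [hx|[g [H hx]]]; right; split=> //; first by left.
by right; exists g, H.
Qed.

Lemma L_sub : sublattice L.
Proof. exact: valL.1. Qed.

Definition Inv b :=
  and6 (forall x, L x -> DP b x /\ DS b x) (forall x, DP b x -> C x)
      (forall x, DS b x -> C x) (sublattice (DP b)) (sublattice (DS b))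
      (forall g, ltW g b -> forall x, DP g x \/ DS g x -> DP b x /\ DS b x).

Lemma K_lem c : Inv c ->
  (forall x, DP c x -> PiD (DS c) x) /\ (forall x, DS c x -> SiD (DP c) x).
Proof.
move=> [i1 i2 i3 i4 i5 i6].
case: (Classical_Prop.classic (exists e, is_pred ltW e c)) => [[e pe]|npred].
  split=> x.
    move=> /(DP_succ pe); apply: PiD_mono => y hy.
    by have [] := i6 e pe.1 y (or_intror hy).
  move=> /(DS_succ pe); apply: SiD_mono => y hy.
  by have [] := i6 e pe.1 y (or_introl hy).
have np : forall g, ~ is_pred ltW g c by move=> g hg; apply: npred; exists g.
split=> x.
  move=> /(DP_ns np) [hx|[g [lg hx]]]; apply: PiD_incl.
    by have [] := i1 x hx.
  by have [] := i6 g lg x (or_introl hx).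
move=> /(DS_ns np) [hx|[g [lg hx]]]; apply: SiD_incl.
  by have [] := i1 x hx.
by have [] := i6 g lg x (or_intror hx).
Qed.

Lemma Inv_all b : Inv b.
Proof.
elim/(well_founded_ind ltW_wf): b => b IH.
case: (Classical_Prop.classic (exists c, is_pred ltW c b)) => [[c pc]|npred].
  have Ic := IH c pc.1.
  have [Kp Ks] := K_lem Ic.
  case: Ic => [i1 i2 i3 i4 i5 i6].
  have claim x : DP c x \/ DS c x -> DP b x /\ DS b x.
    case=> hx; split.
    - by apply/(DP_succ pc); apply: Kp.
    - by apply/(DS_succ pc); apply: SiD_incl.
    - by apply/(DP_succ pc); apply: PiD_incl.
    - by apply/(DS_succ pc); apply: Ks.
  split.
  - by move=> x hx; apply: claim; left; have [] := i1 x hx.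
  - by move=> x /(DP_succ pc); apply: PiD_sub.
  - by move=> x /(DS_succ pc); apply: SiD_sub.
  - apply: (sublattice_iff (D := PiD (DS c))).
      by move=> x; split=> /(DP_succ pc).
    exact: PiD_sublattice.
  - apply: (sublattice_iff (D := SiD (DP c))).
      by move=> x; split=> /(DS_succ pc).
    exact: SiD_sublattice.
  - move=> g lg x hx; case: (proj2 pc g lg) => [e|lgc].
      by subst g; apply: claim.
    by apply: claim; left; have [] := i6 g lgc x hx.
have np : forall g, ~ is_pred ltW g b by move=> g hg; apply: npred; exists g.
have sl (F : WW -> V -> Prop) :
    (forall x, F b x <-> L x \/ exists g, ltW g b /\ F g x) ->
    (forall g, ltW g b -> forall x, L x -> F g x) ->
    (forall g, ltW g b -> sublattice (F g)) ->
    (forall g h, ltW g b -> ltW h b -> ltW g h -> forall x, F g x -> F h x) ->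
    sublattice (F b).
  move=> hF hL hs hm.
  have lift x y : F b x -> F b y -> (L x /\ L y) \/ exists g, ltW g b /\ F g x /\ F g y.
    move=> /hF [hx|[g [lg hx]]] /hF [hy|[h [lh hy]]].
    - by left.
    - by right; exists h; split=> //; split=> //; apply: hL.
    - by right; exists g; split=> //; split=> //; apply: hL.
    - right; case: (ltW_tri g h) => [gh|[e|hg]].
      + by exists h; split=> //; split=> //; apply: (hm g h).
      + by subst h; exists g.
      + by exists g; split=> //; split=> //; apply: (hm h g).
  move=> x y hx hy; case: (lift x y hx hy) => [[lx ly]|[g [lg [gx gy]]]].
    by have [h1 h2] := L_sub lx ly; split; apply/hF; left.
  by have [h1 h2] := hs g lg x y gx gy; split; apply/hF; right; exists g.
split.
- by move=> x hx; split; [apply/(DP_ns np) | apply/(DS_ns np)]; left.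
- move=> x /(DP_ns np) [hx|[g [lg hx]]]; first exact: LC.
  by case: (IH g lg) => _ h _ _ _ _; apply: h.
- move=> x /(DS_ns np) [hx|[g [lg hx]]]; first exact: LC.
  by case: (IH g lg) => _ _ h _ _ _; apply: h.
- apply: sl; first exact: DP_ns.
  + by move=> g lg x hx; case: (IH g lg) => h _ _ _ _ _; have [] := h x hx.
  + by move=> g lg; case: (IH g lg).
  + move=> g h lg lh gh x hx; case: (IH h lh) => _ _ _ _ _ h6.
    by have [] := h6 g gh x (or_introl hx).
- apply: sl; first exact: DS_ns.
  + by move=> g lg x hx; case: (IH g lg) => h _ _ _ _ _; have [] := h x hx.
  + by move=> g lg; case: (IH g lg).
  + move=> g h lg lh gh x hx; case: (IH h lh) => _ _ _ _ _ h6.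
    by have [] := h6 g gh x (or_intror hx).
- move=> g lg x hx.
  have lsb : ltW (succ g) b.
    case: (succ_lt lg) => // e; case: (np g); rewrite e; exact: succ_pred.
  have [hs1 hs2] : DP (succ g) x /\ DS (succ g) x.
    by case: (IH _ lsb) => _ _ _ _ _ h6; apply: (h6 g (succ_pred g).1 x hx).
  case: hx => hx; split.
  + by apply/(DP_ns np); right; exists g.
  + by apply/(DS_ns np); right; exists (succ g).
  + by apply/(DP_ns np); right; exists (succ g).
  + by apply/(DS_ns np); right; exists g.
Qed.

Definition PP b : @Defs.pmap d V E := PMap (DP b) psi.
Definition SS b : @Defs.pmap d V E := PMap (DS b) psi.

Lemma hier : hierarchy (PMap L phi) ltW PP SS.
Proof.
move=> b; split; [|split].
- move=> nlt.
  have np : forall g, ~ is_pred ltW g b by move=> g [hg _]; apply: (nlt g).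
  have eP x : DP b x <-> L x.
    rewrite (DP_ns np); split=> [[//|[g [lg _]]]|]; [by case: (nlt g) | by left].
  have eS x : DS b x <-> L x.
    rewrite (DS_ns np); split=> [[//|[g [lg _]]]|]; [by case: (nlt g) | by left].
  split; split.
  + by move=> x /=; apply: eP.
  + by move=> x /= /eP hx; exact: (extLC.2 x hx).
  + by move=> x /=; apply: eS.
  + by move=> x /= /eS hx; exact: (extLC.2 x hx).
- move=> g pg; case: (Inv_all g) => _ i2 i3 i4 i5 _; split.
    by apply: Pi_ext_lem => // x; apply: DP_succ.
  by apply: Sigma_ext_lem => // x; apply: DS_succ.
- move=> [g0 l0] np.
  have I0 := Inv_all g0; case: (Inv_all b) => _ _ _ _ _ i6.
  split; [|split; [|split]].
  + move=> x /=; rewrite (DP_ns np); split=> [[hx|//]|]; last by right.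
    by exists g0; split=> //; case: I0 => h _ _ _ _ _; have [] := h x hx.
  + move=> g lg; split=> // x hx; by have [] := i6 g lg x (or_introl hx).
  + move=> x /=; rewrite (DS_ns np); split=> [[hx|//]|]; last by right.
    by exists g0; split=> //; case: I0 => h _ _ _ _ _; have [] := h x hx.
  + move=> g lg; split=> // x hx; by have [] := i6 g lg x (or_intror hx).
Qed.

Lemma collapse a : (forall x, DP (succ a) x -> DP a x) -> (forall x, DS (succ a) x -> DS a x) ->
  collapsed_at (PMap L phi) (PP a).
Proof.
move=> hP hS.
have [_ _ _ _ _ i6] := Inv_all (succ a).
have pa := succ_pred a.
have PS x : DP a x -> DS a x by move=> hx; apply: hS; have [] := i6 a pa.1 x (or_introl hx).
have SP' x : DS a x -> DP a x by move=> hx; apply: hP; have [] := i6 a pa.1 x (or_intror hx).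
case: (Inv_all a) => _ i2 i3 i4 i5 _.
exists WW, ltW, PP, SS, a; split; first exact: ltW_wo.
split; first exact: hier.
split; first by exists (PMap (PiD (DS a)) psi); apply: Pi_ext_lem.
split; first by exists (PMap (SiD (DP a)) psi); apply: Sigma_ext_lem.
split; first by left.
split.
  apply: Pi_ext_lem => // x; split; first exact: PiD_incl.
  by move=> /(PiD_mono PS) /(DP_succ pa) /hP.
apply: Sigma_ext_lem => // x; split; first exact: SiD_incl.
by move=> /(DS_succ pa) /hS /SP'.
Qed.

Definition memst b (z : V + V) := match z with inl x => DP b x | inr x => DS b x end.

Lemma extendible_phi : extendible (PMap L phi).
Proof.
apply: Classical_Prop.NNPP => nex.
have H (S : TT) : exists z, memst (S, 1%N) z /\ ~ memst (S, 0%N) z.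
  apply: Classical_Prop.NNPP => nz; apply: nex; exists (PP (S, 0%N)).
  apply: collapse => x hx; apply: Classical_Prop.NNPP => nx; apply: nz.
    by exists (inl x).
  by exists (inr x).
pose g (S : TT) := sval (cid (H S)).
have gP S : memst (S, 1%N) (g S) /\ ~ memst (S, 0%N) (g S) := svalP (cid (H S)).
have key S S' : ltT S S' -> g S <> g S'.
  move=> lt e; have [h1 _] := gP S; have [_ h2] := gP S'; apply: h2; rewrite -e.
  have [_ _ _ _ _ i6] := Inv_all (S', 0%N).
  have l : ltW (S, 1%N) (S', 0%N) by left.
  case: (g S) h1 => [x|x] /= hx.
    by have [] := i6 _ l x (or_introl hx).
  by have [] := i6 _ l x (or_intror hx).
have inj S S' : g S = g S' -> S = S'.
  move=> e; apply: Classical_Prop.NNPP => ne.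
  case: (RR_total S S') => h.
    by apply: (key S S') => //; split.
  by apply: (key S' S) => //; split=> // e'; apply: ne.
pose D : TT := fun z => exists S, g S = z /\ ~ S z.
case: (Classical_Prop.classic (D (g D))) => [hD|nD].
  have [S [e nS]] := hD; rewrite (inj _ _ e) in nS; exact: nS hD.
by apply: (nD); exists D; split; [reflexivity | exact: nD].
Qed.

Lemma final : extendible (PMap L phi) /\
  (forall Q, collapsed_at (PMap L phi) Q -> extends Q (PMap C psi)).
Proof.
split; first exact: extendible_phi.
move=> Q [W [lt [P [S [a [[wf _] [hh [_ [_ [hQ _]]]]]]]]]].
have [h1 h2] := hier_extends wf hh a.
by case: hQ => ->.
Qed.

End PiSigma.


Theorem proposition5p36 (d : Order.disp_t) (V : latticeType d)
    (E : porderZmodType) (L C : V -> Prop) (phi psi : V -> E) :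
  valuation_system (PMap L phi) ->
  valuation_system (PMap C psi) ->
  extends (PMap L phi) (PMap C psi) ->
  complete (PMap C psi) ->
  extendible (PMap L phi) /\
  (forall Q, collapsed_at (PMap L phi) Q -> extends Q (PMap C psi)).
Proof.
move=> [sdV [poE [RcE valL]]] [_ [_ [_ valC]]] ext comp.
exact: (final sdV poE RcE valC comp valL ext).
Qed.
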